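(* Let $n\ge1$, $p\in\mathbb N$ with $p\ge1$, $q\in\mathbb Z$ with $p+q\ge1$, and let $A=\{a_1^{p+q},a_2^{2p+q},\ldots,a_n^{np+q}\}$ (the linear multiset, $k_i=pi+q$). Let $s=\min(m,pn+q)$ and let $\Lambda_m(A)$ be the set of tuples $(\lambda_1,\ldots,\lambda_s)$ of non-negative integers with $\sum_{i=1}^s i\lambda_i=m$ and $\sum_{i=j}^s\lambda_i\le\overline{k_j}$ for $j=1,\ldots,s$. Then $$|C_m(A)|=\sum_{\lambda\in\Lambda_m(A)}\prod_{j=1}^s\binom{\left\lfloor n-\max\!\left(1,\frac{j-q}{p}\right)\right\rfloor+1-\sum_{i=j+1}^s\lambda_i}{\lambda_j}.$$ Moreover, if $m\le n$, then $$|C_m(A)|=\sum_{\substack{\lambda_1+2\lambda_2+\cdots+s\lambda_s=m\\ \lambda_i\in\mathbb Z_{\ge0}}}\prod_{j=1}^s\binom{\left\lfloor n-\max\!\left(1,\frac{j-q}{p}\right)\right\rfloor+1-\sum_{i=j+1}^s\lambda_i}{\lambda_j},$$ the sum running over all non-negative integer solutions.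
   Context: A multiset $A=\{a_1^{k_1},\ldots,a_n^{k_n}\}$ consists of distinct elements $a_1,\ldots,a_n$ with positive integer multiplicities $k_1,\ldots,k_n$. A submultiset of $A$ is a multiset $\{a_1^{r_1},\ldots,a_n^{r_n}\}$ with integers $0\le r_i\le k_i$, of cardinality $r_1+\cdots+r_n$. $C_m(A)$ denotes the set of all submultisets of $A$ of cardinality $m$. For each integer $j\ge1$, $\overline{k_j}=|\{i\in\{1,\ldots,n\}: k_i\ge j\}|$. *)

(* Defs.v *)
From mathcomp Require Import all_boot all_order all_algebra.
Set Implicit Arguments. Unset Strict Implicit. Unset Printing Implicit Defensive.
Import Order.TTheory GRing.Theory Num.Theory.
Local Open Scope ring_scope.

(* A multiset {a_1^{k_1},...,a_n^{k_n}} is encoded by its multiplicity function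
   k : 'I_n -> nat (index i : 'I_n stands for a_{i+1}).  A submultiset
   {a_1^{r_1},...,a_n^{r_n}} is a function r with 0 <= r_i <= k_i; it is
   represented as a finite function with values bounded by max_i k_i. *)
Definition maxmult (n : nat) (k : 'I_n -> nat) : nat := (\max_(i < n) k i)%N.

Definition Cm_set (n : nat) (k : 'I_n -> nat) (m : nat) :
  {set {ffun 'I_n -> 'I_(maxmult k).+1}} :=
  [set r : {ffun 'I_n -> 'I_(maxmult k).+1} | [forall i, (r i <= k i)%N] && ((\sum_(i < n) (r i : nat))%N == m)].

Definition card_Cm (n : nat) (k : 'I_n -> nat) (m : nat) : nat := #|Cm_set k m|.

Definition kbar (n : nat) (k : 'I_n -> nat) (j : nat) : nat :=
  #|[set i : 'I_n | (j <= k i)%N]|.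

Definition lin_mult (n p : nat) (q : int) : 'I_n -> nat :=
  fun i => absz (p%:Z * (i.+1)%:Z + q).

Arguments lin_mult : clear implicits.

Definition s_param (n p : nat) (q : int) (m : nat) : nat :=
  minn m (absz (p%:Z * n%:Z + q)).

(* A tuple (lambda_1,...,lambda_s) is L : {ffun 'I_s -> 'I_m.+1},
   with lambda_{j+1} = L j  (each lambda_i <= m is forced by sum i lambda_i = m). *)
Definition wsum (s m : nat) (L : {ffun 'I_s -> 'I_m.+1}) : nat :=
  (\sum_(i < s) i.+1 * L i)%N.

Definition in_Lambda (n : nat) (k : 'I_n -> nat) (s m : nat)
  (L : {ffun 'I_s -> 'I_m.+1}) : bool :=
  (wsum L == m) &&
  [forall j : 'I_s, ((\sum_(i < s | (j <= i)%N) (L i : nat))%N <= kbar k j.+1)%N].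

Definition binz (t : int) (k : nat) : int :=
  if 0 <= t then ('C(absz t, k))%:Z
  else (-1) ^+ k * ('C((k + absz t).-1, k))%:Z.

Definition top (n p : nat) (q : int) (s m : nat) (L : {ffun 'I_s -> 'I_m.+1})
  (j0 : 'I_s) : int :=
  Num.floor (n%:R - Num.max 1 (((j0.+1)%:R - q%:~R) / p%:R) : rat) + 1
  - (\sum_(i < s | (j0 < i)%N) (L i : nat))%N%:Z.

(* Main.v *)
Require Import Defs.
From mathcomp Require Import all_boot all_order all_algebra.
From mathcomp Require Import zify ring lra.
Set Implicit Arguments. Unset Strict Implicit. Unset Printing Implicit Defensive.
Import Order.TTheory GRing.Theory Num.Theory.

Lemma card_sum (T : finType) (P : pred T) : #|[set x | P x]| = \sum_x (P x : nat).
Proof.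
rewrite -sum1_card big_mkcond /=; apply: eq_bigr => x _; rewrite inE; by case: (P x).
Qed.

Lemma sum_ind s v (P : pred nat) (F : nat -> nat) : v <= s ->
  \sum_(i < s | P i) F i * (v == i.+1) = if (0 < v) && P v.-1 then F v.-1 else 0.
Proof.
case: v => [|u] hu /=.
  by rewrite big1 // => i _; rewrite muln0.
rewrite big_mkcond (bigD1 (Ordinal hu)) //= big1 ?addn0.
  by case: (P u); rewrite ?eqxx ?muln1.
move=> i hi; case: (P i) => //.
have -> : (u.+1 == i.+1) = false.
  by rewrite eqSS; apply/negbTE; rewrite eq_sym.
by rewrite muln0.
Qed.

Lemma sum_ge (T : finType) (r : T -> nat) s l : (forall x, r x <= s) -> 0 < l ->
  #|[set x | l <= r x]| = \sum_(i < s | l <= i.+1) #|[set x | r x == i.+1]|.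
Proof.
move=> hr hl; rewrite (card_sum (fun x => l <= r x)).
under [in RHS]eq_bigr => i _ do rewrite (card_sum (fun x => r x == i.+1)).
rewrite exchange_big /=; apply: eq_bigr => x _.
rewrite (eq_bigr (fun i : 'I_s => (fun _ => 1) (i : nat) * (r x == i.+1))); last by move=> i _; rewrite mul1n.
rewrite (sum_ind (fun i => l <= i.+1) (fun _ => 1) (hr x)); case: (r x) => [|u] /=; last by case: (l <= u.+1).
by case: l hl.
Qed.

Lemma sum_val (T : finType) (r : T -> nat) s : (forall x, r x <= s) ->
  \sum_x r x = \sum_(i < s) i.+1 * #|[set x | r x == i.+1]|.
Proof.
move=> hr.
under [in RHS]eq_bigr => i _ do rewrite (card_sum (fun x => r x == i.+1)) big_distrr.
rewrite exchange_big /=; apply: eq_bigr => x _.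
have := sum_ind xpredT (fun i => i.+1) (hr x).
move=> ->; by case: (r x).
Qed.

Lemma card_between (T : finType) (X B : {set T}) c : X \subset B -> #|X| <= c ->
  #|[set Y : {set T} | (X \subset Y) && (Y \subset B) && (#|Y| == c)]| =
  'C(#|B| - #|X|, c - #|X|).
Proof.
move=> XB Xc.
have eB : #|B| - #|X| = #|B :\: X| by rewrite cardsD (setIidPr XB).
rewrite eB -cards_draws.
have inj : {in [set Z : {set T} | Z \subset B :\: X & #|Z| == c - #|X|] &,
             injective (fun Z => Z :|: X)}.
  move=> Z1 Z2; rewrite !inE => /andP [h1 _] /andP [h2 _] e.
  apply/setP => x; move/setP: e => /(_ x); rewrite !inE.
  case xX: (x \in X) => /=; last by rewrite !orbF.
  have n1 : x \notin Z1 by apply/negP => /(subsetP h1); rewrite inE xX.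
  have n2 : x \notin Z2 by apply/negP => /(subsetP h2); rewrite inE xX.
  by rewrite (negbTE n1) (negbTE n2).
rewrite -(card_in_imset inj); apply: eq_card => Y; rewrite !inE.
apply/idP/imsetP.
  move=> /andP [/andP [XY YB] /eqP cY]; exists (Y :\: X).
    rewrite inE setSD //= cardsD (setIidPr XY) cY //.
  apply/setP => x; rewrite !inE; case xX: (x \in X) => /=; last by rewrite orbF.
  by rewrite (subsetP XY).
move=> [Z]; rewrite inE => /andP [ZB /eqP cZ] ->.
have dZ : [disjoint Z & X].
  rewrite disjoint_subset; apply: (subset_trans ZB).
  by apply/subsetP => x; rewrite !inE => /andP [].
rewrite subsetUr /= subUset XB andbT.
have : #|Z :|: X| = #|Z| + #|X| by rewrite cardsU (disjoint_setI0 dZ) cards0 subn0.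
move=> ->; rewrite cZ subnK // eqxx andbT.
apply: (subset_trans ZB); apply/subsetP => x; by rewrite !inE => /andP [].
Qed.

Ltac blia := repeat (match goal with
 | H : is_true (_ && _) |- _ => let a := fresh "a" in let b := fresh "b" in destruct (andP H) as [a b]; clear H
 | |- _ -> _ => intro
 | |- is_true (_ && _) => apply/andP; split
 end);
 repeat match goal with |- context [nat_of_ord ?x] => let y := fresh "y" in set y := nat_of_ord x in * end;
 lia.

Section Chain.
Variables (T : finType) (B : nat) (k : T -> nat) (t : nat -> nat).

Definition Kset (l : nat) : {set T} := [set i | l <= k i].

Definition Pj (j : nat) (X : {set T}) (r : {ffun T -> 'I_B.+1}) : bool :=
  [&& [forall i, (r i <= j) && (r i <= k i)], [forall i in X, j <= r i] &
      all (fun l => #|[set i | l <= r i]| == t l) (iota 1 j)].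

Definition W j X := #|[set r | Pj j X r]|.

Definition VY j (X : {set T}) := [set Y : {set T} | (X \subset Y) && (Y \subset Kset j) && (#|Y| == t j)].

Lemma W0 X : W 0 X = 1.
Proof.
rewrite /W (_ : [set r | Pj 0 X r] = [set [ffun => ord0]]) ?cards1 //.
apply/setP => r; rewrite !inE /Pj /= andbT.
apply/idP/idP.
  move=> /andP [/forallP h _]; apply/eqP/ffunP => i; rewrite ffunE.
  apply/val_inj => /=; have := h i; rewrite leqn0 => /andP [/eqP -> _] //.
move=> /eqP ->; apply/andP; split; apply/forallP => i; rewrite ?ffunE //=.
by rewrite implybT.
Qed.

Lemma Wrec j X : j < B -> W j.+1 X = \sum_(Y in VY j.+1 X) W j Y.
Proof.
move=> jB.
rewrite /W /Pj -sum1dep_card (partition_big (fun r : {ffun T -> 'I_B.+1} => [set i | j.+1 <= r i]) (fun Y => Y \in VY j.+1 X)); last first.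
  move=> r /and3P [/forallP h1 /forallP h2 /allP h3].
  rewrite !inE -andbA; apply/and3P; split.
  - by apply/subsetP => i iX; rewrite inE; have := h2 i; rewrite iX.
  - by apply/subsetP => i; rewrite !inE => h; have := h1 i; case/andP => _; apply: leq_trans.
  - by apply: h3; rewrite mem_iota; blia.
apply: eq_bigr => Y; rewrite inE -andbA => /and3P [XY YK /eqP cY].
rewrite sum1dep_card.
pose g (r : {ffun T -> 'I_B.+1}) : {ffun T -> 'I_B.+1} := [ffun i => if i \in Y then inord j.+1 else r i].
have gval r i : (g r i : nat) = if i \in Y then j.+1 else r i.
  by rewrite ffunE; case: (i \in Y) => //; rewrite inordK.
have inj : {in [set r | Pj j Y r] &, injective g}.
  move=> r1 r2; rewrite !inE => /and3P [/forallP a1 /forallP b1 _] /and3P [/forallP a2 /forallP b2 _] e.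
  apply/ffunP => i; apply/val_inj; move/ffunP: e => /(_ i) /(congr1 (@nat_of_ord _)); rewrite /= !gval.
  case iY: (i \in Y) => //= _.
  have := a1 i; have := a2 i; have := b1 i; have := b2 i; rewrite iY /=; blia.
rewrite -(card_in_imset inj); apply: eq_card => r; rewrite inE.
apply/idP/imsetP.
- move=> /andP [/and3P [/forallP h1 /forallP h2 /allP h3] /eqP eY].
  have iYr i : (i \in Y) = (j.+1 <= (r : {ffun T -> 'I_B.+1}) i) by rewrite -eY inE.
  pose f : {ffun T -> 'I_B.+1} := [ffun i => inord (minn (r i) j)].
  have fval i : (f i : nat) = minn ((r : {ffun T -> 'I_B.+1}) i) j.
    rewrite ffunE inordK //; have := ltn_ord (r i); blia.
  exists f.
    rewrite inE; apply/and3P; split.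
    + apply/forallP => i; rewrite fval; have := h1 i; blia.
    + apply/forallP => i; apply/implyP; rewrite iYr fval; blia.
    + apply/allP => l; rewrite mem_iota => hl.
      rewrite -(eqP (h3 l _)); last by rewrite mem_iota; blia.
      apply/eqP; apply: eq_card => i; rewrite !inE fval; blia.
  apply/ffunP => i; apply/val_inj; rewrite /= gval fval iYr.
  have := h1 i; case: ifP; blia.
- move=> [r'' ]; rewrite inE => /and3P [/forallP h1 /forallP h2 /allP h3] ->.
  have eY : [set i | j.+1 <= g r'' i] = Y.
    apply/setP => i; rewrite inE gval; case iY: (i \in Y); first by rewrite ltnSn.
    by case/andP: (h1 i) => a _; rewrite ltnNge a.
  rewrite eY eqxx andbT; apply/and3P; split.
  + apply/forallP => i; rewrite gval; case iY: (i \in Y).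
      by rewrite leqnn /=; move/subsetP: YK => /(_ i iY); rewrite /Kset inE.
    by have := h1 i; blia.
  + apply/forallP => i; apply/implyP => iX; rewrite gval (subsetP XY i iX) //.
  + apply/allP => l; rewrite mem_iota => hl.
    case: (ltngtP l j.+1) => hlj; try blia.
      rewrite -(eqP (h3 l _)); last by rewrite mem_iota; blia.
      apply/eqP; apply: eq_card => i; rewrite !inE gval; case iY: (i \in Y).
        by have := h2 i; rewrite iY /=; blia.
      by [].
    by rewrite hlj eY cY.
Qed.

Lemma Wclosed j (X : {set T}) : j <= B -> (forall l, t l.+1 <= t l) -> X \subset Kset j.+1 -> #|X| = t j.+1 ->
  W j X = \prod_(l < j) 'C(#|Kset l.+1| - t l.+2, t l.+1 - t l.+2).
Proof.
move=> + tdec; elim: j X => [|j IH] X jB XK cX; first by rewrite W0 big_ord0.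
rewrite Wrec //.
rewrite (eq_bigr (fun _ => \prod_(l < j) 'C(#|Kset l.+1| - t l.+2, t l.+1 - t l.+2))); last first.
  move=> Y; rewrite inE -andbA => /and3P [_ YK /eqP cY]; apply: IH => //; exact: ltnW.
rewrite sum_nat_const big_ord_recr /= mulnC; congr (_ * _).
have XK' : X \subset Kset j.+1.
  apply: (subset_trans XK); apply/subsetP => i; rewrite !inE; exact: ltnW.
by rewrite /VY card_between // cX.
Qed.

End Chain.

Lemma split_suffix s (a : 'I_s -> nat) (i : 'I_s) :
  \sum_(j < s | i.+1 <= j.+1) a j = a i + \sum_(j < s | i.+2 <= j.+1) a j.
Proof.
rewrite (bigD1 i) /= ?leqnn //; congr (_ + _); apply: eq_bigl => j.
by rewrite !ltnS ltn_neqAle eq_sym andbC.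
Qed.

Lemma suffix_eq s (a b : 'I_s -> nat) :
  (forall l, 0 < l -> l <= s -> \sum_(i < s | l <= i.+1) a i = \sum_(i < s | l <= i.+1) b i) ->
  forall i, a i = b i.
Proof.
move=> h i; have := h i.+1 isT (ltn_ord i); rewrite !split_suffix.
have [lt|ge] := ltnP i.+1 s.
  by rewrite (h i.+2 isT lt); apply: addIn.
rewrite !big1 ?addn0 // => j; rewrite !ltnS => hj; have := ltn_ord j; lia.
Qed.

Lemma suffix_dec s (a : 'I_s -> nat) l :
  \sum_(i < s | l.+1 <= i.+1) a i <= \sum_(i < s | l <= i.+1) a i.
Proof.
rewrite big_mkcond [X in _ <= X]big_mkcond; apply: leq_sum => i _.
case: ifP => // h; rewrite (leq_trans (leqnSn l) h) //.
Qed.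

Section Fibre.
Variables (n : nat) (k : 'I_n -> nat) (m s : nat).
Local Notation B := (maxmult k).
Local Notation FF := {ffun 'I_n -> 'I_B.+1}.

Definition lam (r : FF) : {ffun 'I_s -> 'I_m.+1} :=
  [ffun j : 'I_s => inord #|[set i | (r i : nat) == j.+1]|].

Definition tL (L : {ffun 'I_s -> 'I_m.+1}) (l : nat) := \sum_(i < s | l <= i.+1) (L i : nat).

Hypothesis hs : forall i, minn (k i) m <= s.

Lemma Cm_bound (r : FF) : r \in Cm_set k m -> forall i, r i <= s.
Proof.
rewrite inE => /andP [/forallP hk /eqP hsum] i.
apply: leq_trans (hs i); rewrite leq_min hk -hsum.
by rewrite (bigD1 i) //= leq_addr.
Qed.

Lemma cnt_le (r : FF) : r \in Cm_set k m -> forall j : 'I_s, #|[set i | (r i : nat) == j.+1]| <= m.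
Proof.
move=> hr j; have hb := Cm_bound hr.
move: hr; rewrite inE => /andP [_ /eqP hsum].
rewrite -hsum (sum_val hb) (bigD1 j) //=.
apply: leq_trans (leq_addr _ _); exact: leq_pmull.
Qed.

Lemma lamE (r : FF) : r \in Cm_set k m -> forall j : 'I_s, (lam r j : nat) = #|[set i | (r i : nat) == j.+1]|.
Proof. by move=> hr j; rewrite ffunE inordK // ltnS (cnt_le hr). Qed.

End Fibre.

Lemma in_Lambda_lam n (k : 'I_n -> nat) m s (hs : forall i, minn (k i) m <= s) r :
  r \in Cm_set k m -> in_Lambda k (lam m s r).
Proof.
move=> hr; have hb := Cm_bound hs hr.
have hr' := hr; move: hr'; rewrite inE => /andP [/forallP hk /eqP hsum].
apply/andP; split.
  rewrite /wsum; under eq_bigr => j _ do rewrite (lamE hs hr j).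
  by rewrite -(sum_val hb) hsum.
apply/forallP => j.
under eq_bigr => i _ do rewrite (lamE hs hr i).
rewrite (eq_bigl (fun i : 'I_s => j.+1 <= i.+1)) // -(sum_ge hb (ltn0Sn j)).
apply: subset_leq_card; apply/subsetP => x; rewrite !inE => h.
exact: leq_trans h (hk x).
Qed.

Lemma fibre n (k : 'I_n -> nat) m s (hs : forall i, minn (k i) m <= s) L :
  in_Lambda k L ->
  [set r | (r \in Cm_set k m) && (lam m s r == L)] = [set r | Pj k (tL L) s set0 r].
Proof.
move=> /andP [/eqP hw _].
apply/setP => r; rewrite [X in X = _]in_set [X in _ = X]in_set; apply/idP/idP.
  move=> /andP [hr /eqP <-]; have hb := Cm_bound hs hr.
  have hr' := hr; move: hr'; rewrite inE => /andP [/forallP hk /eqP hsum].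
  apply/and3P; split.
  - by apply/forallP => i; rewrite hb hk.
  - by apply/forallP => i; rewrite inE.
  - apply/allP => l; rewrite mem_iota => /andP [l1 _].
    rewrite (sum_ge hb l1) /tL; apply/eqP; apply: eq_bigr => i _.
    by rewrite (lamE hs hr).
move=> /and3P [/forallP h1 _ /allP h3].
have hb : forall i, r i <= s by move=> i; case/andP: (h1 i).
have key : forall i : 'I_s, #|[set x | (r x : nat) == i.+1]| = L i.
  apply: (suffix_eq (a := fun i : 'I_s => #|[set x | (r x : nat) == i.+1]|) (b := fun i => (L i : nat))).
  move=> l l0 ls; rewrite -(sum_ge hb l0); apply/eqP; apply: h3.
  by rewrite mem_iota; lia.
have inC : r \in Cm_set k m.
  rewrite inE; apply/andP; split.
    by apply/forallP => i; case/andP: (h1 i).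
  rewrite (sum_val hb) -hw /wsum; apply/eqP; apply: eq_bigr => i _; by rewrite key.
rewrite inC /=; apply/eqP/ffunP => j; apply/val_inj.
by rewrite /= (lamE hs inC) key.
Qed.

Lemma general (n : nat) (k : 'I_n -> nat) (m s : nat) :
  (forall i, minn (k i) m <= s) -> s <= maxmult k ->
  card_Cm k m = \sum_(L : {ffun 'I_s -> 'I_m.+1} | in_Lambda k L)
      \prod_(j < s) 'C(kbar k j.+1 - \sum_(i < s | j < i) (L i : nat), L j).
Proof.
move=> hs sB.
rewrite /card_Cm -sum1_card (partition_big (lam m s) (@in_Lambda _ k s m)); last first.
  by move=> r hr; apply: in_Lambda_lam.
apply: eq_bigr => L HL.
rewrite sum1dep_card fibre //.
rewrite -/(W _ _ _ _ _) (Wclosed (j := s)) //; last first.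
- by rewrite cards0 /tL big1 // => i; rewrite ltnS leqNgt ltn_ord.
- exact: sub0set.
- by move=> l; apply: suffix_dec.
apply: eq_bigr => l _.
have e2 : tL L l.+2 = \sum_(i < s | l < i) (L i : nat) by [].
have e1 : tL L l.+1 = L l + tL L l.+2 by rewrite /tL (split_suffix (fun i => (L i : nat)) l).
by rewrite e1 addnK e2.
Qed.

Local Open Scope ring_scope.

Lemma natz_rat (n : nat) : (n%:R : rat) = (n%:Z)%:~R.
Proof. by rewrite -pmulrn. Qed.



Lemma card_ge n a : #|[set i : 'I_n | (a <= i)%N]| = (n - a)%N.
Proof.
rewrite (card_sum (fun i : 'I_n => (a <= i)%N)).
elim: n => [|n IH]; first by rewrite big_ord0.
rewrite big_ord_recr /= IH; case: (leqP a n) => h /=; lia.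
Qed.

Lemma kbar_lin n p q jj : (1 <= n)%N -> (1 <= p)%N -> 1 <= p%:Z + q -> (1 <= jj)%N ->
  jj%:Z <= p%:Z * n%:Z + q ->
  Num.floor (n%:R - Num.max 1 ((jj%:R - q%:~R) / p%:R) : rat) + 1 = (kbar (lin_mult n p q) jj)%:Z.
Proof.
move=> n1 p1 pq j1 jN.
set y := (jj%:R - q%:~R) / p%:R : rat.
have pR : (0 : rat) < p%:R by rewrite ltr0n.
have key : forall z : int, (y <= z%:~R) = (jj%:Z <= p%:Z * z + q).
  move=> z; rewrite /y ler_pdivrMr // natz_rat (natz_rat p) -intrB -intrM ler_int.
  apply/idP/idP => h; lia.
set x := Num.max 1 y.
have x1 : 1 <= x by rewrite le_max lexx.
have xn : x <= n%:R.
  rewrite ge_max (natz_rat n) key ler1n n1 /=; lia.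
set f := Num.floor (n%:R - x).
have f0 : 0 <= f by rewrite floor_ge0; lra.
have fn : f < n%:Z by rewrite floor_lt_int -natz_rat; lra.
have eqv : forall i : 'I_n, (jj <= lin_mult n p q i)%N = (n%:Z <= (i.+1)%:Z + f).
  move=> i.
  have -> : (jj <= lin_mult n p q i)%N = (jj%:Z <= p%:Z * (i.+1)%:Z + q).
    rewrite /lin_mult; apply/idP/idP => h; lia.
  rewrite -key.
  have e1 : (y <= ((i.+1)%:Z)%:~R) = (x <= (i.+1)%:R) by rewrite ge_max -natz_rat ler1n.
  have e2 : (x <= (i.+1)%:R) = (((n%:Z - (i.+1)%:Z))%:~R <= n%:R - x).
    by rewrite intrB -!natz_rat; apply/idP/idP => h; lra.
  rewrite e1 e2 -floor_ge_int -/f; apply/idP/idP => h; lia.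
rewrite /kbar (eq_card (B := [set i : 'I_n | (n - 1 - absz f <= i)%N])); last first.
  by move=> i; rewrite !inE eqv; apply/idP/idP => h; lia.
rewrite card_ge; lia.
Qed.


Unset Implicit Arguments.
Unset Strict Implicit.

Theorem theorem4p4 (n p : nat) (q : int) (m : nat) :
  (1 <= n)%N -> (1 <= p)%N -> 1 <= p%:Z + q ->
  ((card_Cm (lin_mult n p q) m)%:Z =
     \sum_(L : {ffun 'I_(s_param n p q m) -> 'I_m.+1}
             | in_Lambda (lin_mult n p q) L)
        \prod_(j < s_param n p q m) binz (top n p q L j) (L j))
  /\
  ((m <= n)%N ->
   (card_Cm (lin_mult n p q) m)%:Z =
     \sum_(L : {ffun 'I_(s_param n p q m) -> 'I_m.+1} | wsum L == m)
        \prod_(j < s_param n p q m) binz (top n p q L j) (L j)).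
Proof.
move=> n1 p1 pq.
have hN : forall i : 'I_n, (lin_mult n p q i <= absz (p%:Z * n%:Z + q)%R)%N.
  by move=> i; rewrite /lin_mult; have := ltn_ord i; nia.
have hs : forall i, (minn (lin_mult n p q i) m <= s_param n p q m)%N.
  by move=> i; have := hN i; rewrite /s_param; lia.
have sB : (s_param n p q m <= maxmult (lin_mult n p q))%N.
  have hn : (n.-1 < n)%N by lia.
  apply: (leq_trans _ (leq_bigmax (Ordinal hn))).
  by rewrite /lin_mult /s_param /= prednK // geq_minr.
have part1 : (card_Cm (lin_mult n p q) m)%:Z =
     \sum_(L : {ffun 'I_(s_param n p q m) -> 'I_m.+1}
             | in_Lambda (lin_mult n p q) L)
        \prod_(j < s_param n p q m) binz (top n p q L j) (L j).
  rewrite (general hs sB) -natz natr_sum; apply: eq_bigr => L HL.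
  rewrite natr_prod; apply: eq_bigr => j _; rewrite natz.
  have hsuf : (\sum_(i < s_param n p q m | (j < i)%N) (L i : nat) <= kbar (lin_mult n p q) j.+1)%N.
    move: HL => /andP [_ /forallP /(_ j) h]; apply: leq_trans h.
    exact: (suffix_dec (fun i => (L i : nat)) j.+1).
  have hj : (j.+1 <= s_param n p q m)%N := ltn_ord j.
  rewrite /top kbar_lin //; last by move: hj; rewrite /s_param; nia.
  by rewrite subzn // /binz le0z_nat.
split => // mn; rewrite part1; apply: eq_bigl => L.
rewrite /in_Lambda; case hw: (wsum L == m) => //=.
apply/forallP => j.
set S := (\sum_(i < s_param n p q m | (j <= i)%N) (L i : nat))%N.
have hjs : (j.+1 <= s_param n p q m)%N := ltn_ord j.
have hsm : (s_param n p q m <= m)%N by rewrite /s_param geq_minl.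
have h1 : (j.+1 * S <= m)%N.
  suff : (j.+1 * S <= wsum L)%N by rewrite (eqP hw).
  rewrite /S /wsum big_distrr /= big_mkcond [X in (_ <= X)%N]big_mkcond /=.
  apply: leq_sum => i _; case: ifP => // ji; rewrite leq_mul2r ltnS ji orbT //.
have h2 : (n - j <= kbar (lin_mult n p q) j.+1)%N.
  rewrite -card_ge /kbar; apply: subset_leq_card; apply/subsetP => i; rewrite !inE /lin_mult => h.
  nia.
have : (S <= n - j)%N by nia.
by move=> h; apply: leq_trans h h2.
Qed.
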